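(* Let $k,n\ge1$, let $M=\Gamma(\mathbb Z\,\overrightarrow{\times}\,G,(k,0))$ with $G$ a Dedekind $\sigma$-complete $\ell$-group (a $\mathrm{Rad}$-Dedekind $\sigma$-complete $k$-perfect MV-algebra), let $x$ be an $n$-dimensional observable on $M$ and $F=F_x$. Let $i$ be the least integer in $\{1,\ldots,k\}$ such that $T_i\neq\emptyset$. Then $T_i$ has only finitely many characteristic points.
   Context: $\mathbb Z\,\overrightarrow{\times}\,G$ is $\mathbb Z\times G$ with lexicographic order ($(a,g)\le(b,h)$ iff $a<b$ or ($a=b$ and $g\le h$)); $\Gamma(K,v)=([0,v];\oplus,',0,v)$ with $a\oplus b=(a+b)\wedge v$, $a'=v-a$. Partial addition on $M$: $a+b$ defined iff the group sum is $\le(k,0)$. Summable sequence: every finite subfamily has a sum in $M$; its sum is the supremum of finite partial sums. An $n$-dimensional observable is $x:\mathcal B(\mathbb R^n)\to M$ with $x(\mathbb R^n)=1$ and, for pairwise disjoint Borel $A_m$, $(x(A_m))_m$ summable with $x(\bigcup A_m)=\sum_m x(A_m)$. $F_x(s_1,\ldots,s_n)=x((-\infty,s_1)\times\cdots\times(-\infty,s_n))$. For $j=0,\ldots,k$, $M_j=\{(j,g)\in M\}$ and $T_j=\{\mathbf s\in\mathbb R^n\colon F(\mathbf s)\in M_j\}$. For $i\ge1$ and $\mathbf s=(s_1,\ldots,s_n)\in T_i$, $\pi^i_j(\mathbf s)=\inf\{r\in\mathbb R\colon(s_1,\ldots,s_{j-1},r,s_{j+1},\ldots,s_n)\in T_i\}$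 and $\pi_i(\mathbf s)=(\pi^i_1(\mathbf s),\ldots,\pi^i_n(\mathbf s))$; the characteristic points of $T_i$ are the points $\pi_i(\mathbf s)$, $\mathbf s\in T_i$. *)

(* Defs.v *)
From HB Require Import structures.
From mathcomp Require Import all_boot all_order all_algebra.
From mathcomp Require Import all_classical all_reals all_analysis.
Set Implicit Arguments. Unset Strict Implicit. Unset Printing Implicit Defensive.
Import Order.TTheory GRing.Theory Num.Theory.
Local Open Scope classical_set_scope.
Local Open Scope ring_scope.

Section LGroup.
Variables (G : zmodType) (le : rel G).

Definition is_lgroup : Prop :=
  [/\ [/\ (forall a, le a a),
      (forall a b, le a b -> le b a -> a = b) &
      (forall a b c, le a b -> le b c -> le a c)],
      (forall a b c, le a b -> le (a + c) (b + c)),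
      (forall a b, exists s, [/\ le a s, le b s &
          forall u, le a u -> le b u -> le s u]) &
      (forall a b, exists t, [/\ le t a, le t b &
          forall u, le u a -> le u b -> le u t])].

Definition dedekind_sigma_complete : Prop :=
  forall u : nat -> G, (exists b, forall m, le (u m) b) ->
    exists s, (forall m, le (u m) s) /\
              (forall b, (forall m, le (u m) b) -> le s b).

Definition is_dsc_lgroup : Prop := is_lgroup /\ dedekind_sigma_complete.

Definition lexle (p q : int * G) : Prop :=
  (p.1 < q.1)%R \/ (p.1 = q.1 /\ le p.2 q.2).

(* M = Gamma(Z lex G, (k,0)) as a subset of Z x G *)
Definition inM (k : nat) (p : int * G) : Prop :=
  lexle (0, 0) p /\ lexle p (k%:Z, 0).

Definition is_supM (k : nat) (P : set (int * G)) (s : int * G) : Prop :=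
  [/\ inM k s, (forall p, P p -> lexle p s) &
      (forall b, inM k b -> (forall p, P p -> lexle p b) -> lexle s b)].

(* every finite subfamily has a sum in M (partial addition defined) *)
Definition summableM (k : nat) (y : nat -> int * G) : Prop :=
  forall S : seq nat, uniq S -> inM k (\sum_(m <- S) y m).

Definition sumM (k : nat) (y : nat -> int * G) (s : int * G) : Prop :=
  is_supM k [set \sum_(m < N) y m | N in [set: nat]] s.

End LGroup.

Section Obs.
Variables (R : realType) (G : zmodType) (le : rel G) (k n : nat).

Definition borel_n : set (set 'rV[R]_n) := <<s [set U : set 'rV[R]_n | @open 'rV[R^o]_n U] >>.

Definition observable (x : set 'rV[R]_n -> int * G) : Prop :=
  [/\ (forall A, borel_n A -> inM le k (x A)),
      x setT = (k%:Z, 0) &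
      (forall A : nat -> set 'rV[R]_n, (forall m, borel_n (A m)) ->
         (forall m1 m2, m1 <> m2 -> A m1 `&` A m2 = set0) ->
         summableM le k (x \o A) /\ sumM le k (x \o A) (x (\bigcup_m A m)))].

Definition Fx (x : set 'rV[R]_n -> int * G) (s : 'rV[R]_n) : int * G :=
  x [set t : 'rV[R]_n | forall j, t ord0 j < s ord0 j].

Definition Tset (x : set 'rV[R]_n -> int * G) (j : nat) : set 'rV[R]_n :=
  [set s | inM le k (Fx x s) /\ (Fx x s).1 = j%:Z].

Definition replace_coord (s : 'rV[R]_n) (j : 'I_n) (r : R) : 'rV[R]_n :=
  \row_l (if l == j then r else s ord0 l).

Definition pi_ij (x : set 'rV[R]_n -> int * G) (i : nat) (j : 'I_n)
    (s : 'rV[R]_n) : \bar R :=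
  ereal_inf [set r%:E | r in [set r : R | Tset x i (replace_coord s j r)]].

Definition pi_i (x : set 'rV[R]_n -> int * G) (i : nat) (s : 'rV[R]_n)
    : 'rV[\bar R]_n :=
  \row_j pi_ij x i j s.

Definition char_points (x : set 'rV[R]_n -> int * G) (i : nat)
    : set 'rV[\bar R]_n :=
  [set pi_i x i s | s in Tset x i].

End Obs.

(* Main.v *)
Require Import Defs.
From HB Require Import structures.
From mathcomp Require Import all_boot all_order all_algebra.
From mathcomp Require Import all_classical all_reals all_analysis.
From mathcomp Require Import lra zify finmap.
Import Order.TTheory GRing.Theory Num.Theory.
Local Open Scope classical_set_scope.
Local Open Scope ring_scope.

Definition orth {R : realType} {n} (s : 'rV[R]_n) : set 'rV[R]_n :=
  [set t : 'rV[R]_n | forall j, t ord0 j < s ord0 j].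

Lemma open_orth (R : realType) n (s : 'rV[R]_n) :
  @open 'rV[R^o]_n (orth s).
Proof.
move=> u /= Hu.
pose e := \big[Order.min/1]_(j < n) (s ord0 j - u ord0 j).
have e0 : 0 < e.
  rewrite /e; apply: lt_bigmin => // j _; rewrite subr_gt0; exact: Hu.
apply/nbhs_ballP; exists e => //= v [_ uv] j.
have := uv ord0 j.
rewrite /ball /= => h.
have : e <= s ord0 j - u ord0 j by rewrite /e; apply: bigmin_le_cond.
move: h; rewrite ltr_norml => /andP[h1 h2] h3.
lra.
Qed.

Lemma borel_orth {R : realType} {n} (s : 'rV[R]_n) : borel_n (orth s).
Proof. apply: sub_gen_smallest; exact: open_orth. Qed.

Lemma borelD {R : realType} {n} {A B : set 'rV[R]_n} :
  borel_n A -> borel_n B -> borel_n (A `\` B).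
Proof.
move=> hA hB.
pose F := fun k : nat => if k == 0%N then setT `\` A else B.
have hF : forall k, borel_n (F k).
  by move=> k; rewrite /F; case: (k == 0%N) => //; exact: sigma_algebraCD.
have hU := sigma_algebra_bigcup hF.
have -> : A `\` B = setT `\` \bigcup_k F k.
  apply/seteqP; split=> y.
    move=> [Ay nBy]; split => // -[k _]; rewrite /F.
    by case: (k == 0%N) => [[]|].
  move=> [_ hy]; split.
    apply: contrapT => nAy; apply: hy; exists 0%N => //.
  by move=> By; apply: hy; exists 1%N.
exact: sigma_algebraCD.
Qed.

Lemma borel0 (R : realType) n : @borel_n R n set0.
Proof. exact: sigma_algebra0. Qed.

Lemma fst_sum (G : zmodType) (S : seq nat) (F : nat -> int * G) :
  (\sum_(m <- S) F m).1 = \sum_(m <- S) (F m).1.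
Proof.
elim: S => [|a S IH]; first by rewrite !big_nil.
by rewrite !big_cons /= IH.
Qed.

Lemma lexle_fst {G : zmodType} {le : rel G} {p q} : lexle le p q -> p.1 <= q.1.
Proof. by case=> [/ltW|[->]]. Qed.

Lemma inM_fst {G : zmodType} {le : rel G} {k p} : inM le k p -> 0 <= p.1 <= k%:Z.
Proof. by case=> /lexle_fst /= -> /lexle_fst /= ->. Qed.

Lemma pairE (G : zmodType) (a b : int * G) : a + b = (a.1 + b.1, a.2 + b.2).
Proof. by case: a; case: b. Qed.

Lemma x_set0 (R : realType) (G : zmodType) (le : rel G) (k n : nat)
  (hG : is_dsc_lgroup le) (x : set 'rV[R]_n -> int * G) (hx : observable le k x) :
  x set0 = 0.
Proof.
case: hG => -[[_ hanti _] htr _ _] _.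
case: hx => hM _ hadd.
have hd : forall m1 m2 : nat, m1 <> m2 -> (fun _ : nat => @set0 'rV[R]_n) m1 `&` (fun _ => set0) m2 = set0.
  by move=> *; rewrite setI0.
have [hs hsup] := hadd (fun _ => set0) (fun _ => borel0 _ _) hd.
have h1 := inM_fst (hs _ (iota_uniq 0 k.+1)).
rewrite fst_sum big_const_seq count_predT size_iota /= in h1.
have h0 := hM _ (borel0 R n).
case E: (x set0) h0 h1 => [a g] h0 h1.
rewrite iter_addr_0 /= in h1.
have a0 : a = 0.
  have := inM_fst h0 => /= /andP[ha _].
  move: h1; rewrite -mulr_natr => /andP[_ h1].
  nia.
subst a.
have hU : \bigcup_m (fun _ : nat => @set0 'rV[R]_n) m = set0.
  by apply/seteqP; split => y // [].
rewrite hU E in hsup.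
case: hsup => _ ub _.
have := ub (\sum_(m < 2) (x \o (fun _ => set0)) m) (ex_intro2 _ _ 2%N I erefl).
rewrite !big_ord_recr big_ord0 /= E add0r /=.
rewrite pairE /=.
case=> [|[_ hle]]; first by rewrite addr0 ltxx.
have hle' := htr _ _ (- g) hle.
rewrite addrK subrr in hle'.
case: h0 => hlo _; case: hlo => [/=|[_ hge]]; first by rewrite ltxx.
by rewrite (hanti g 0 hle' hge).
Qed.

Lemma lexle_add (G : zmodType) (le : rel G)
  (htr : forall a b c, le a b -> le (a + c) (b + c)) (p q r : int * G) :
  lexle le p q -> lexle le (p + r) (q + r).
Proof.
rewrite !pairE /lexle /=; case=> [h|[h1 h2]].
  by left; rewrite ltrD2r.
by right; split; [rewrite h1 | exact: htr].
Qed.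

Lemma lexle_refl (G : zmodType) (le : rel G) (hrefl : forall a, le a a) p :
  lexle le p p.
Proof. by right; split. Qed.

Lemma add2 (R : realType) (G : zmodType) (le : rel G) (k n : nat)
  (hG : is_dsc_lgroup le) (x : set 'rV[R]_n -> int * G) (hx : observable le k x)
  (A B : set 'rV[R]_n) (hA : borel_n A) (hB : borel_n B) (hAB : A `&` B = set0) :
  (x (A `|` B)).1 = (x A).1 + (x B).1.
Proof.
have x0 := @x_set0 R G le k n hG x hx.
case: hG => -[[hrefl _ _] htr _ _] _.
case: hx => hM _ hadd.
pose C := fun m : nat => if m == 0%N then A else if m == 1%N then B else set0.
have hC : forall m, borel_n (C m).
  by move=> [|[|m]] //=; exact: borel0.
have hd : forall m1 m2 : nat, m1 <> m2 -> C m1 `&` C m2 = set0.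
  move=> [|[|m1]] [|[|m2]] h /=; rewrite ?setI0 ?set0I ?hAB ?(setIC B) //;
  by exfalso; apply: h.
have hU : \bigcup_m C m = A `|` B.
  apply/seteqP; split=> y.
    by move=> [[|[|m]] _ /= hy]; [left|right|].
  by case=> hy; [exists 0%N | exists 1%N].
have [hs hsup] := hadd C hC hd.
rewrite hU in hsup.
pose b := x A + x B.
have hb : inM le k b.
  have := hs [:: 0%N; 1%N] erefl.
  by rewrite !big_cons big_nil addr0.
have hP : forall N, \sum_(m < N.+2) (x \o C) m = b.
  move=> N; rewrite big_ord_recl big_ord_recl /= big1 ?addr0 //.
case: hsup => _ ub least.
have h1 := lexle_fst (ub b (ex_intro2 _ _ 2%N I (hP 0%N))).
have h2 : lexle le (x (A `|` B)) b.
  apply: least => // p [[|[|N]] _ <-].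
  - by rewrite big_ord0; case: hb.
  - rewrite big_ord_recl big_ord0 addr0 /=.
    case: (hM _ hB) => hlo _.
    have := @lexle_add _ le htr _ _ (x A) hlo.
    by rewrite add0r addrC.
  - rewrite hP; exact: (@lexle_refl _ le hrefl).
have h3 := lexle_fst h2.
rewrite /b pairE /= in h1 h3.
by apply/eqP; rewrite eq_le h1 h3.
Qed.

Lemma rcE (R : realType) n (s : 'rV[R]_n) j r l :
  replace_coord s j r ord0 l = if l == j then r else s ord0 l.
Proof. by rewrite /replace_coord mxE. Qed.

Lemma slab (R : realType) (G : zmodType) (le : rel G) (k n : nat)
  (hG : is_dsc_lgroup le) (x : set 'rV[R]_n -> int * G) (hx : observable le k x)
  (i : nat) (j : 'I_n) (s : 'rV[R]_n) (hs : Tset le k x i s)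
  (v : R) (hv : pi_ij le k x i j s = v%:E) (e : R) (he : 0 < e) :
  exists B : set 'rV[R]_n,
    [/\ borel_n B, 1 <= (x B).1 & forall y, B y -> v - e < y ord0 j < v + e].
Proof.
case: (hx) => hM _ _.
set S := [set r%:E | r in [set r : R | Tset le k x i (replace_coord s j r)]].
have hinf : ereal_inf S = v%:E := hv.
have [_ [r' hr' <-] hlt] : exists2 y, S y & (y < (v + e)%:E)%E.
  by apply: ereal_inf_lt; rewrite hinf lte_fin ltrDl.
rewrite lte_fin in hlt.
have vr' : v <= r'.
  have := ereal_inf_lbound (S:=S) (ex_intro2 _ _ r' hr' erefl).
  by rewrite hinf lee_fin.
pose r := v - e / 2.
have nr : ~ Tset le k x i (replace_coord s j r).
  move=> h; have := ereal_inf_lbound (S:=S) (ex_intro2 _ _ r h erefl).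
  rewrite hinf lee_fin /r; lra.
pose O := orth (replace_coord s j r).
pose O' := orth (replace_coord s j r').
have hsub : O `<=` O'.
  move=> t Ht l; have := Ht l; rewrite !rcE; case: ifP => // _.
  rewrite /r; lra.
exists (O' `\` O); split.
- by apply: borelD; apply: borel_orth.
- have hOd : O `&` (O' `\` O) = set0 by rewrite setDIK.
  have := @add2 R G le k n hG x hx O (O' `\` O) (borel_orth _)
     (borelD (borel_orth _) (borel_orth _)) hOd.
  rewrite setDUK //.
  case: hr' => _ hr'; rewrite /Fx -/(orth _) -/O' in hr'; rewrite hr'.
  have hO : (x O).1 != i%:Z.
    apply/eqP => h; apply: nr; split; first exact: hM (borel_orth _).
    exact: h.
  have := inM_fst (hM _ (borelD (borel_orth (replace_coord s j r'))
                                 (borel_orth (replace_coord s j r)))).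
  move: hO; rewrite -/O -/O'.
  move: (x O).1 (x (O' `\` O)).1 => a b.
  move=> /eqP hab /andP[hb _] h; lia.
- move=> y [hO' hnO].
  have h1 := hO' j; rewrite rcE eqxx in h1.
  have h2 : ~ (y ord0 j < r).
    move=> hyr; apply: hnO => l; rewrite rcE.
    case: (eqVneq l j) => [->//|hl].
    by have := hO' l; rewrite rcE (negbTE hl).
  move/negP: h2; rewrite -leNgt => h2.
  apply/andP; split; rewrite /r in h2; lra.
Qed.

Lemma sep1 (R : realType) (a : R) (l : seq R) :
  exists2 d, 0 < d & forall b, b \in l -> b != a -> 2 * d <= `|a - b|.
Proof.
elim: l => [|b l [d hd IH]]; first by exists 1.
have [->|hba] := eqVneq b a.
  exists d => // c; rewrite in_cons => /orP[/eqP->|hc]; first by rewrite eqxx.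
  exact: IH.
have hab : 0 < `|a - b| by rewrite normr_gt0 subr_eq0 eq_sym.
exists (Order.min d (`|a - b| / 2)).
  by rewrite lt_min hd /=; lra.
have hm1 : Order.min d (`|a - b| / 2) <= d by rewrite ge_min lexx.
have hm2 : Order.min d (`|a - b| / 2) <= `|a - b| / 2 by rewrite ge_min lexx orbT.
move=> c; rewrite in_cons => /orP[/eqP->|hc] hca.
  lra.
have := IH c hc hca; lra.
Qed.

Lemma sepl (R : realType) (l : seq R) :
  exists2 d, 0 < d & forall a b, a \in l -> b \in l -> a != b -> 2 * d <= `|a - b|.
Proof.
elim: l => [|a l [d1 hd1 IH]]; first by exists 1.
have [d2 hd2 H2] := @sep1 R a l.
exists (Order.min d1 d2); first by rewrite lt_min hd1 hd2.
have hm1 : Order.min d1 d2 <= d1 by rewrite ge_min lexx.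
have hm2 : Order.min d1 d2 <= d2 by rewrite ge_min lexx orbT.
move=> a' b'; rewrite !in_cons => /orP[/eqP->|ha] /orP[/eqP->|hb] hab.
- by rewrite eqxx in hab.
- have := H2 b' hb; rewrite eq_sym => /(_ hab); lra.
- have := H2 a' ha hab; rewrite distrC; lra.
- have := IH a' b' ha hb hab; lra.
Qed.

Lemma rows_fin (T : choiceType) n (U : set T) :
  finite_set U -> finite_set [set v : 'rV[T]_n | forall j, U (v ord0 j)].
Proof.
move=> /finite_fsetP[X ->].
have hfin : finite_set ((fun f : {ffun 'I_n -> X} => (\row_j val (f j) : 'rV[T]_n)) @` setT).
  exact: finite_image.
apply: (sub_finite_set _ hfin).
move=> v hv.
exists [ffun j => [` (hv j : v ord0 j \in X)]%fset] => //.
by apply/rowP => j; rewrite !mxE ffunE.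
Qed.

Lemma coord_fin (R : realType) (G : zmodType) (le : rel G) (k n : nat)
  (hG : is_dsc_lgroup le) (x : set 'rV[R]_n -> int * G) (hx : observable le k x)
  (i : nat) (j : 'I_n) :
  finite_set [set v : R | exists2 s, Tset le k x i s & pi_ij le k x i j s = v%:E].
Proof.
apply: contrapT => hinf.
have [B hB hcard] := infinite_set_fset k.+1 hinf.
pose l := enum_fset B.
have hsz : (k.+1 <= size l)%N by [].
have hl : uniq l := fset_uniq B.
have [d hd hsep] := @sepl R l.
have H : forall m : nat, exists C : set 'rV[R]_n,
    [/\ borel_n C,
        (m < size l)%N -> 1 <= (x C).1 /\
          (forall y, C y -> nth 0 l m - d < y ord0 j < nth 0 l m + d) &
        (size l <= m)%N -> C = set0].
  move=> m; case: (ltnP m (size l)) => hm.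
    have hin : nth 0 l m \in l by exact: mem_nth.
    have [s hs hv] := hB _ hin.
    have [C [hC1 hC2 hC3]] := @slab R G le k n hG x hx i j s hs _ hv d hd.
    exists C; split => //.
  by exists set0; split => //; exact: borel0.
have [C hC] := choice H.
case: (hx) => _ _ hadd.
have hCb : forall m, borel_n (C m) by move=> m; case: (hC m).
have hd' : forall m1 m2 : nat, m1 <> m2 -> C m1 `&` C m2 = set0.
  move=> m1 m2 hm12.
  case: (ltnP m1 (size l)) => h1; last by case: (hC m1) => _ _ ->; rewrite // set0I.
  case: (ltnP m2 (size l)) => h2; last by case: (hC m2) => _ _ ->; rewrite // setI0.
  case: (hC m1) => _ /(_ h1) [_ s1] _.
  case: (hC m2) => _ /(_ h2) [_ s2] _.
  apply/seteqP; split => y // [y1 y2].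
  have := s1 y y1; have := s2 y y2.
  have hne : nth 0 l m1 != nth 0 l m2 by rewrite nth_uniq //; apply/eqP.
  have := hsep _ _ (mem_nth 0 h1) (mem_nth 0 h2) hne.
  move: (nth 0 l m1) (nth 0 l m2) (y ord0 j) => a b c.
  rewrite ler_normr => /orP[] h3 /andP[h5 h6] /andP[h7 h8]; lra.
have [hs _] := hadd C hCb hd'.
have := inM_fst (hs _ (iota_uniq 0 (size l))).
rewrite fst_sum => /andP[_ hup].
have hlow : forall N, (N <= size l)%N ->
    (N%:Z <= \sum_(m <- iota 0 N) ((x \o C) m).1).
  elim=> [|N IH] hN; first by rewrite big_nil.
  rewrite -addn1 iotaD big_cat /= big_cons big_nil addr0 add0n.
  have := IH (ltnW hN).
  case: (hC N) => _ /(_ hN) [h1 _] _.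
  move: (\sum_(m <- iota 0 N) (x (C m)).1) => t.
  move=> h2.
  lia.
have := hlow _ (leqnn _).
move: hup hsz; move: (\sum_(m <- iota 0 (size l)) ((x \o C) m).1) => t.
lia.
Qed.

Theorem lemma4p1 (R : realType) (G : zmodType) (le : rel G) (k n : nat)
  (hk : (1 <= k)%N) (hn : (1 <= n)%N) (hG : is_dsc_lgroup le)
  (x : set 'rV[R]_n -> int * G) (hx : observable le k x)
  (i : nat) (hi : (1 <= i <= k)%N) (hTi : Tset le k x i !=set0)
  (hmin : forall j : nat, (1 <= j < i)%N -> Tset le k x j = set0) :
  finite_set (char_points le k x i).
Proof.
pose V := fun j : 'I_n => [set pi_ij le k x i j s | s in Tset le k x i].
have hV : forall j, finite_set (V j).
  move=> j.
  have hW := @coord_fin R G le k n hG x hx i j.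
  apply: (sub_finite_set (B := (EFin @` [set v : R | exists2 s, Tset le k x i s &
             pi_ij le k x i j s = v%:E]) `|` [set -oo%E; +oo%E])).
    move=> _ [s hs <-].
    case E: (pi_ij le k x i j s) => [v| |].
    - by left; exists v => //; exists s.
    - by right; right.
    - by right; left.
  by rewrite finite_setU; split; [exact: finite_image | exact: finite_set2].
pose U := \bigcup_(j in [set: 'I_n]) V j.
have hU : finite_set U by apply: bigcup_finite => // j _; exact: hV.
apply: (sub_finite_set _ (@rows_fin _ n U hU)).
move=> _ [s hs <-] j; exists j => //; exists s => //.
by rewrite /pi_i mxE.
Qed.
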